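(* Let $T_l$ be a $2m$ deck-shuffler IET and $H_l$ as below. For $C\subset[0,1)$ let $J(C)$ denote the closed convex hull of $H_l(C)$ in $\mathbb{R}$. For sets $X,Y\subset\mathbb{R}$ write $X<Y$ if $x<y$ for all $x\in X$, $y\in Y$. Then: (i) if $1\le i\le m-1$ and $H_l(A_i)$ is a single point, then $J(B_i)-\tfrac12<J(A_i)$ or $J(A_i)<J(B_{i+1})-\tfrac12$; (ii) if $2\le i\le m$ and $H_l(B_i)$ is a single point, then $J(A_{i-1})+\tfrac12<J(B_i)$ or $J(B_i)<J(A_i)+\tfrac12$; (iii) if $H_l(A_m\cup B_1)$ is a single point, then $J(B_m)-\tfrac12<J(A_m\cup B_1)$ or $J(A_m\cup B_1)<J(A_1)+\tfrac12$.
   Context: A $2m$ deck-shuffler IET $T_l$ is the map $[0,1)\to[0,1)$ determined by a length vector $l$ giving a partition of $[0,1)$ into consecutive left-closed right-open intervals $A_1<\dots<A_m<B_1<\dots<B_m$ of positive lengths, with $T_l(x)=x+|B_1|+\dots+|B_i|$ for $x\in A_i$ and $T_l(x)=x-|A_i|-\dots-|A_m|$ for $x\in B_i$. $B=B_1\cup\dots\cup B_m$ and $H_l(x)=\sum_{n=0}^\infty \chi_B(T_l^n x)/2^{n+1}$. For a set $X$ and $c\in\mathbb{R}$, $X+c=\{x+c:x\in X\}$. *)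

(* Defs.v *)
From Stdlib Require Import Reals Rtopology.
From Coquelicot Require Import Coquelicot.
Open Scope R_scope.

(* psum f n = f 1 + ... + f n  (indices start at 1). *)
Fixpoint psum (f : nat -> R) (n : nat) : R :=
  match n with O => 0 | S k => psum f k + f (S k) end.

Definition ind (u v x : R) : R :=
  if Rle_dec u x then (if Rlt_dec x v then 1 else 0) else 0.

Section DS.
(* m : number of blocks; a i = |A_i|, b i = |B_i| for 1 <= i <= m. *)
Variables (m : nat) (a b : nat -> R).

Definition SA : R := psum a m.

Definition Aset (i : nat) (x : R) : Prop := psum a (i - 1) <= x < psum a i.
Definition Bset (i : nat) (x : R) : Prop :=
  SA + psum b (i - 1) <= x < SA + psum b i.

(* The deck-shuffler map: x in A_i |-> x + |B_1|+..+|B_i|,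
   x in B_i |-> x - (|A_i|+..+|A_m|). (Identity outside [0,1), irrelevant.) *)
Definition Tmap (x : R) : R :=
  x + psum (fun i => ind (psum a (i - 1)) (psum a i) x * psum b i) m
    - psum (fun i => ind (SA + psum b (i - 1)) (SA + psum b i) x
                     * (SA - psum a (i - 1))) m.

Definition chiB (x : R) : R := ind SA (SA + psum b m) x.

Definition Hmap (x : R) : R :=
  Series (fun n => chiB (Nat.iter n Tmap x) / 2 ^ (n + 1)).
End DS.

Definition image (f : R -> R) (C : R -> Prop) (y : R) : Prop :=
  exists x, C x /\ f x = y.

Definition convex_set (K : R -> Prop) : Prop :=
  forall x y t, K x -> K y -> 0 <= t <= 1 -> K (t * x + (1 - t) * y).

Definition closed_convex_hull (X : R -> Prop) (y : R) : Prop :=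
  forall K : R -> Prop, closed_set K -> convex_set K ->
    (forall x, X x -> K x) -> K y.

Definition is_singleton (X : R -> Prop) : Prop :=
  exists c, forall y, X y <-> y = c.

Definition set_lt (X Y : R -> Prop) : Prop :=
  forall x y, X x -> Y y -> x < y.

Definition shift (X : R -> Prop) (c : R) (y : R) : Prop :=
  exists x, X x /\ y = x + c.

Definition setU (X Y : R -> Prop) (x : R) : Prop := X x \/ Y x.

(* Main.v *)
Require Import Defs.
From Stdlib Require Import Reals Rtopology.
From Coquelicot Require Import Coquelicot.
From Stdlib Require Import Lra Lia Classical.
From Stdlib Require List ZArith.
Open Scope R_scope.

Lemma nat_arch (r : R) : exists n : nat, r < INR n.
Proof.
  destruct (archimed r) as [H1 _].
  destruct (ZArith_dec.Z_le_gt_dec 0 (up r)) as [Hz|Hz].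
  - exists (Z.to_nat (up r)). rewrite INR_IZR_INZ, Znat.Z2Nat.id by assumption. lra.
  - exists 0%nat. simpl. apply Z.gt_lt in Hz. apply IZR_lt in Hz. lra.
Qed.

Lemma pow2_ge1 n : 1 <= 2 ^ n.
Proof. induction n; simpl; lra. Qed.

Lemma pow2_gt n : INR n < 2 ^ n.
Proof.
  induction n. simpl; lra.
  rewrite S_INR. simpl. pose proof (pow2_ge1 n). lra.
Qed.

Lemma big_pow (d : R) : 0 < d -> exists n, 1 < 2 ^ n * d.
Proof.
  intros Hd. destruct (nat_arch (/ d)) as [n Hn]. exists n.
  pose proof (pow2_gt n).
  assert (/ d < 2 ^ n) by lra.
  apply Rmult_lt_compat_r with (r := d) in H0; [|lra].
  rewrite Rinv_l in H0; lra.
Qed.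

Lemma pow2_mono i j : (i <= j)%nat -> 2 ^ i <= 2 ^ j.
Proof. intros; apply Rle_pow; lra || lia. Qed.

Lemma first_fail (P : nat -> Prop) (p : nat) :
  (forall j, (j < p)%nat -> P j) \/ (exists n, (n < p)%nat /\ ~ P n /\ forall j, (j < n)%nat -> P j).
Proof.
  induction p.
  - left; intros; lia.
  - destruct IHp as [H|H].
    + destruct (classic (P p)) as [Hp|Hp].
      * left; intros j Hj. destruct (Nat.eq_dec j p); [subst; auto|apply H; lia].
      * right; exists p; repeat split; auto.
    + right. destruct H as [n [Hn [Hn1 Hn2]]]. exists n; repeat split; auto.
Qed.

Lemma pigeon (M : nat) (g : nat -> nat) :
  (forall i, (i <= M)%nat -> (g i < M)%nat) ->
  exists i j, (i < j <= M)%nat /\ g i = g j.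
Proof.
  intros Hg. apply NNPP; intro Hn.
  assert (HN : List.NoDup (List.map g (List.seq 0 (S M)))).
  { apply List.NoDup_map_NoDup_ForallPairs; [|apply List.seq_NoDup].
    intros x y Hx Hy Hxy. apply List.in_seq in Hx, Hy.
    destruct (Compare_dec.lt_eq_lt_dec x y) as [[H|H]|H]; auto.
    - exfalso; apply Hn; exists x, y; split; [lia|auto].
    - exfalso; apply Hn; exists y, x; split; [lia|auto]. }
  assert (HI : List.incl (List.map g (List.seq 0 (S M))) (List.seq 0 M)).
  { intros z Hz. apply List.in_map_iff in Hz. destruct Hz as [x [<- Hx]].
    apply List.in_seq in Hx. apply List.in_seq. specialize (Hg x). lia. }
  pose proof (List.NoDup_incl_length HN HI).
  rewrite List.length_map, !List.length_seq in H. lia.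
Qed.

Definition SS (x : R) : Prop := 0 <= x < 1.

Section Core.
Variables (T H chi : R -> R) (dl : R).
Hypothesis ax_TS : forall x, SS x -> SS (T x).
Hypothesis ax_inj : forall x y, SS x -> SS y -> T x = T y -> x = y.
Hypothesis ax_H1 : forall x, SS x -> H x = chi x / 2 + H (T x) / 2.
Hypothesis ax_dl : 0 < dl.
Hypothesis ax_sep : forall x, SS x ->
  (chi x = 0 /\ H x <= 1/2 - dl) \/ (chi x = 1 /\ 1/2 + dl <= H x).
Hypothesis ax_mono : forall x y, SS x -> SS y -> x <= y -> H x <= H y.
Hypothesis ax_exp : forall x y, SS x -> SS y -> x < y -> chi x = chi y ->
  T x < T y /\ y - x <= T y - T x.
Hypothesis ax_loc : forall z, SS z ->
    (exists eps, 0 < eps /\ forall e, 0 <= e <= eps -> SS (z - e) /\ T (z - e) = T z - e) \/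
    (exists eps, 0 < eps /\ forall e, 0 < e <= eps -> SS (z - e) -> chi (z - e) <> chi z) \/
    (exists w, SS w /\ chi w <> chi z /\ T w <= T z /\
       exists eps, 0 < eps /\ forall e, 0 < e <= eps -> SS (z - e) /\ T (z - e) = T w - e).

Notation it n x := (Nat.iter n T x).

Lemma it_S n x : SS x -> SS (it n x).
Proof. intros Hx; induction n; simpl; auto. Qed.

Lemma sameH_chi x y : SS x -> SS y -> H x = H y -> chi x = chi y.
Proof.
  intros Hx Hy E. destruct (ax_sep x Hx) as [[A1 A2]|[A1 A2]];
  destruct (ax_sep y Hy) as [[B1 B2]|[B1 B2]]; lra.
Qed.

Lemma close_chi x y : SS x -> SS y -> Rabs (H x - H y) < 2 * dl -> chi x = chi y.
Proof.
  intros Hx Hy E. apply Rabs_def2 in E.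
  destruct (ax_sep x Hx) as [[A1 A2]|[A1 A2]];
  destruct (ax_sep y Hy) as [[B1 B2]|[B1 B2]]; lra.
Qed.

Lemma H_T x : SS x -> H (T x) = 2 * H x - chi x.
Proof. intros Hx. rewrite (ax_H1 x Hx). lra. Qed.

Lemma level_T x y : SS x -> SS y -> H x = H y -> H (T x) = H (T y).
Proof.
  intros Hx Hy E. rewrite !H_T by auto. rewrite (sameH_chi x y Hx Hy E), E. lra.
Qed.

Lemma level_it n x y : SS x -> SS y -> H x = H y -> H (it n x) = H (it n y).
Proof.
  intros Hx Hy E; induction n; simpl; auto.
  apply level_T; auto using it_S.
Qed.

Lemma iterdiff n x y : SS x -> SS y -> 2 ^ n * Rabs (H x - H y) < 2 * dl ->
  forall j, (j <= n)%nat -> H (it j x) - H (it j y) = 2 ^ j * (H x - H y).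
Proof.
  intros Hx Hy Hb j. induction j; intros Hj.
  - simpl; lra.
  - assert (IH := IHj ltac:(lia)). simpl.
    assert (Hc : chi (it j x) = chi (it j y)).
    { apply close_chi; auto using it_S. rewrite IH, Rabs_mult, Rabs_pos_eq by (pose proof (pow2_ge1 j); lra).
      pose proof (pow2_mono j n ltac:(lia)). pose proof (Rabs_pos (H x - H y)). nra. }
    rewrite !H_T by auto using it_S. rewrite Hc. nra.
Qed.

Lemma exp_it p y y' : SS y -> SS y' -> y < y' -> H y = H y' ->
  it p y < it p y' /\ y' - y <= it p y' - it p y.
Proof.
  intros Hy Hy' Hl E. induction p.
  - simpl; lra.
  - simpl. destruct IHp as [I1 I2].
    destruct (ax_exp (it p y) (it p y')) as [E1 E2]; auto using it_S.
    apply sameH_chi; auto using it_S. apply level_it; auto.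
    split; lra.
Qed.

Lemma fix_level p v : (forall y, SS y -> H y = v -> H (it p y) = v) ->
  forall y, SS y -> H y = v -> it p y = y.
Proof.
  intros Hp y Hy Hv.
  set (f := fun u => it p u).
  assert (Hf : forall k, SS (Nat.iter k f y) /\ H (Nat.iter k f y) = v).
  { induction k; simpl; auto. destruct IHk as [I1 I2]. split.
    apply it_S; auto. apply Hp; auto. }
  set (g := f y - y).
  destruct (Rtotal_order g 0) as [Hg|[Hg|Hg]].
  -
    assert (Hk : forall k, Nat.iter k f y <= y + INR k * g).
    { induction k. simpl; lra.
      rewrite S_INR. simpl. destruct (Hf k) as [F1 F2].
      destruct (Rle_lt_or_eq_dec _ _ (Rle_trans _ _ _ IHk (ltac:(assert (0 <= INR k) by apply pos_INR; nra) : y + INR k * g <= y))) as [Hlt|Heq].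
      - destruct (exp_it p (Nat.iter k f y) y) as [_ E2]; auto; try congruence.
        unfold f in *. unfold g in *. lra.
      - rewrite Heq. unfold g, f in *. rewrite Heq in IHk. nra. }
    destruct (nat_arch (/ (- g))) as [k Hkk].
    specialize (Hk k). destruct (Hf k) as [[F0 _] _].
    assert (INR k * - g > 1).
    { apply Rmult_lt_compat_r with (r := - g) in Hkk; [|lra]. rewrite Rinv_l in Hkk; lra. }
    destruct Hy. nra.
  - unfold g, f in *. lra.
  - assert (Hk : forall k, y + INR k * g <= Nat.iter k f y).
    { induction k. simpl; lra.
      rewrite S_INR. simpl. destruct (Hf k) as [F1 F2].
      destruct (Rle_lt_or_eq_dec _ _ (Rle_trans _ _ _ (ltac:(assert (0 <= INR k) by apply pos_INR; nra) : y <= y + INR k * g) IHk)) as [Hlt|Heq].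
      - destruct (exp_it p y (Nat.iter k f y)) as [_ E2]; auto; try congruence.
        unfold f in *. unfold g in *. lra.
      - rewrite <- Heq. unfold g, f in *. rewrite <- Heq in IHk. nra. }
    destruct (nat_arch (/ g)) as [k Hkk].
    specialize (Hk k). destruct (Hf k) as [[_ F0] _].
    assert (INR k * g > 1).
    { apply Rmult_lt_compat_r with (r := g) in Hkk; [|lra]. rewrite Rinv_l in Hkk; lra. }
    destruct Hy. nra.
Qed.


Lemma event_per L y0 : SS L -> SS y0 -> L < y0 -> H L = H y0 ->
  exists k p, (1 <= p)%nat /\ H (it (k + p) L) = H (it k L).
Proof.
  intros HL Hy0 Hlt E.
  set (r := (y0 - L) / 2).
  assert (Hr : 0 < r) by (unfold r; lra).
  set (g := fun n => Z.to_nat (up (it n L / r))).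
  assert (Ht : forall n, it n L < INR (g n) * r <= it n L + r /\ INR (g n) * r < it n y0).
  { intros n. unfold g.
    destruct (archimed (it n L / r)) as [A1 A2].
    pose proof (it_S n L HL) as [Z0 Z1].
    assert (Hd : 0 <= it n L / r) by (apply Rdiv_le_0_compat; lra).
    assert (Hu : (0 <= up (it n L / r))%Z).
    { apply le_IZR. lra. }
    rewrite INR_IZR_INZ, Znat.Z2Nat.id by assumption.
    destruct (exp_it n L y0) as [_ E2]; auto.
    assert (Hm : it n L = (it n L / r) * r) by (field; lra).
    set (u := it n L / r) in *. set (U := IZR (up u)) in *.
    assert (U * r - u * r = (U - u) * r) by ring.
    assert (0 < (U - u) * r) by (apply Rmult_lt_0_compat; lra).
    assert ((U - u) * r <= 1 * r) by (apply Rmult_le_compat_r; lra).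
    assert (Hr2 : 2 * r = y0 - L) by (unfold r; lra).
    split; [split|]; lra. }
  destruct (nat_arch (/ r)) as [M HM].
  destruct (pigeon M g) as [i [j [Hij Hg]]].
  { intros i _. apply INR_lt. destruct (Ht i) as [_ T2].
    pose proof (it_S i y0 Hy0) as [_ Y1].
    assert (INR (g i) < / r).
    { apply Rmult_lt_reg_r with r; auto. rewrite Rinv_l by lra. lra. }
    lra. }
  exists i, (j - i)%nat. split; [lia|].
  replace (i + (j - i))%nat with j by lia.
  set (t := INR (g i) * r).
  assert (Hlev : forall n, INR (g n) * r = t -> H t = H (it n L)).
  { intros n Hn. destruct (Ht n) as [[T1 T2] T3]. rewrite Hn in *.
    pose proof (it_S n L HL) as [Z0 Z1]. pose proof (it_S n y0 Hy0) as [Y0 Y1].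
    assert (SS t) by (split; lra).
    apply Rle_antisym.
    - rewrite (level_it n L y0 HL Hy0 E). apply ax_mono; auto. split; lra. lra.
    - apply ax_mono; auto. split; lra. lra. }
  rewrite <- (Hlev j), <- (Hlev i); auto. unfold t; rewrite Hg; auto.
Qed.

Lemma per_L L y0 : SS L -> SS y0 -> L < y0 -> H L = H y0 ->
  exists p, (1 <= p)%nat /\ it p L = L.
Proof.
  intros HL Hy0 Hlt E.
  destruct (event_per L y0 HL Hy0 Hlt E) as [k [p [Hp Hk]]].
  exists p; split; auto.
  assert (Hf : it p (it k L) = it k L).
  { apply (fix_level p (H (it k L))); auto using it_S.
    intros y Hy Hv. rewrite (level_it p y (it k L)); auto using it_S.
    rewrite <- Nat.iter_add, Nat.add_comm; auto. }
  clear Hk. induction k; auto.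
  apply IHk. simpl in Hf. rewrite Nat.iter_swap in Hf.
  apply ax_inj in Hf; auto using it_S.
Qed.

Lemma core L R q wL e1 : 0 <= L -> L < R -> R <= 1 ->
  (forall t, L <= t < R -> H t = q) -> SS wL -> T wL = L -> 0 < e1 ->
  (forall x, L - e1 <= x < L -> exists w, SS w /\ T w = x /\ chi w <> chi wL) ->
  ~ (forall eta, 0 < eta -> exists x, SS x /\ x < L /\ q - eta < H x).
Proof.
  intros H0L HLR HR1 Hq HwL TwL He1 Hpre Hsup.
  assert (HL : SS L) by (split; lra).
  assert (HqL : H L = q) by (apply Hq; lra).
  set (y0 := (L + R) / 2).
  assert (Hy0 : SS y0) by (unfold y0; split; lra).
  destruct (per_L L y0 HL Hy0 ltac:(unfold y0; lra)) as [p [Hp HpL]].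
  { rewrite HqL, Hq; auto. unfold y0; split; lra. }
  destruct p as [|p']; [lia|].
  assert (fixl : forall j y, SS y -> H y = H (it j L) -> it (S p') y = y).
  { intros j y Hy Hv. apply (fix_level (S p') (H (it j L))); auto.
    intros u Hu Hu'. rewrite (level_it (S p') u (it j L)); auto using it_S.
    rewrite <- Nat.iter_add, Nat.add_comm, Nat.iter_add, HpL; auto. }
  assert (perj : forall j, it (S p') (it j L) = it j L).
  { intros j. apply (fixl j); auto using it_S. }
  assert (close : forall e0 eta, 0 < e0 -> 0 < eta -> exists x, SS x /\ L - e0 <= x < L /\
                  q - eta < H x /\ H x <= q).
  { intros e0 eta He0 Heta. destruct (Hsup eta Heta) as [x0 [Hx0 [Hx0L Hx0q]]].
    exists (Rmax x0 (L - e0)).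
    assert (SS (Rmax x0 (L - e0))).
    { destruct Hx0. split. apply Rle_trans with x0; auto; apply Rmax_l.
      apply Rmax_lub_lt; lra. }
    split; auto. split. split. apply Rmax_r. apply Rmax_lub_lt; lra.
    split. apply Rlt_le_trans with (H x0); auto. apply ax_mono; auto; apply Rmax_l.
    rewrite <- HqL. apply ax_mono; auto. apply Rlt_le, Rmax_lub_lt; lra. }
  set (Good := fun j => exists eps, 0 < eps /\ forall e, 0 <= e <= eps ->
                 SS (it j L - e) /\ T (it j L - e) = T (it j L) - e).
  assert (track : forall n, (forall j, (j < n)%nat -> Good j) -> exists eps, 0 < eps /\
            forall e, 0 <= e <= eps -> forall j, (j <= n)%nat -> it j (L - e) = it j L - e).
  { induction n; intros HG.
    - exists 1; split; [lra|]. intros e _ j Hj. replace j with 0%nat by lia. reflexivity.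
    - destruct IHn as [eps [Heps Htr]]. { intros; apply HG; lia. }
      destruct (HG n ltac:(lia)) as [eps' [Heps' Htr']].
      exists (Rmin eps eps'). split. apply Rmin_pos; auto.
      intros e He j Hj. destruct (Nat.eq_dec j (S n)) as [->|Hne].
      + simpl. rewrite (Htr e ltac:(pose proof (Rmin_l eps eps'); lra) n ltac:(lia)).
        apply Htr'. pose proof (Rmin_r eps eps'); lra.
      + apply Htr; [pose proof (Rmin_l eps eps'); lra| lia]. }
  assert (Hpow : 0 < 2 ^ S p') by (pose proof (pow2_ge1 (S p')); lra).
  destruct (first_fail Good (S p')) as [Hall|[n [Hn [Hbad Hgood]]]].
  - destruct (track (S p') Hall) as [eps [Heps Htr]].
    destruct (close (Rmin eps e1) (dl / 2 ^ S p')) as [x [Hx [[Hx1 Hx2] [Hx3 Hx4]]]].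
    { apply Rmin_pos; auto. } { apply Rdiv_lt_0_compat; auto. }
    set (e := L - x).
    assert (He : 0 <= e <= eps) by (unfold e; pose proof (Rmin_l eps e1); lra).
    assert (Hxe : x = L - e) by (unfold e; lra).
    assert (Hfx : it (S p') x = x).
    { rewrite Hxe, (Htr e He (S p') ltac:(lia)), HpL. reflexivity. }
    assert (Hb : 2 ^ S p' * Rabs (H x - H L) < 2 * dl).
    { rewrite HqL, Rabs_left1 by lra.
      assert (q - H x < dl / 2 ^ S p') by lra.
      apply Rmult_lt_compat_l with (r := 2 ^ S p') in H0; auto.
      field_simplify in H0; lra. }
    pose proof (iterdiff (S p') x L Hx HL Hb (S p') ltac:(lia)) as Hd.
    rewrite Hfx, HpL in Hd.
    assert (HxL : H x = H L).
    { assert ((2 ^ S p' - 1) * (H x - H L) = 0) by lra.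
      apply Rmult_integral in H0. destruct H0; [|lra].
      simpl in H0. pose proof (pow2_ge1 p'). lra. }
    destruct (Hpre x ltac:(pose proof (Rmin_r eps e1); lra)) as [w [Hw [Tw Hcw]]].
    apply Hcw.
    assert (E1 : it p' x = w).
    { apply ax_inj; auto using it_S. rewrite Tw. exact Hfx. }
    assert (E2 : it p' L = wL).
    { apply ax_inj; auto using it_S. rewrite TwL. exact HpL. }
    rewrite <- E1, <- E2. apply sameH_chi; auto using it_S. apply level_it; auto.
  - destruct (track n Hgood) as [eps [Heps Htr]].
    set (z := it n L).
    assert (Hz : SS z) by (apply it_S; auto).
    destruct (ax_loc z Hz) as [C1|[C2|C3]].
    + apply Hbad. exact C1.
    + destruct C2 as [eps2 [Heps2 Hc2]].
      destruct (close (Rmin (Rmin eps e1) eps2) (dl / 2 ^ S p')) as [x [Hx [[Hx1 Hx2] [Hx3 Hx4]]]].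
      { repeat apply Rmin_pos; auto. } { apply Rdiv_lt_0_compat; auto. }
      pose proof (Rmin_l (Rmin eps e1) eps2). pose proof (Rmin_r (Rmin eps e1) eps2).
      pose proof (Rmin_l eps e1). pose proof (Rmin_r eps e1).
      set (e := L - x).
      assert (Hxe : x = L - e) by (unfold e; lra).
      assert (Hnx : it n x = z - e).
      { rewrite Hxe. apply Htr; [unfold e; lra|lia]. }
      assert (Hb : 2 ^ S p' * Rabs (H x - H L) < 2 * dl).
      { rewrite HqL, Rabs_left1 by lra.
        assert (q - H x < dl / 2 ^ S p') by lra.
        apply Rmult_lt_compat_l with (r := 2 ^ S p') in H4; auto.
        field_simplify in H4; lra. }
      assert (Hb' : 2 ^ n * Rabs (H x - H L) < 2 * dl).
      { pose proof (pow2_mono n (S p') ltac:(lia)). pose proof (Rabs_pos (H x - H L)). nra. }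
      pose proof (iterdiff n x L Hx HL Hb' n ltac:(lia)) as Hd.
      apply (Hc2 e). unfold e; lra.
      rewrite <- Hnx; apply it_S; auto.
      rewrite <- Hnx. apply close_chi; auto using it_S.
      unfold z. rewrite Hd, Rabs_mult, Rabs_pos_eq by (pose proof (pow2_ge1 n); lra). exact Hb'.
    + destruct C3 as [w [Hw [Hcw [Twz [eps3 [Heps3 Hc3]]]]]].
      assert (HTw : SS (T w)) by auto.
      assert (HzS : SS (T z)) by auto.
      assert (Hlev : H (T w) = H (it (S n) L)).
      { apply Rle_antisym. apply ax_mono; auto.
        apply Rnot_lt_le. intro Hg.
        set (gam := H (it (S n) L) - H (T w)).
        assert (Hgam : 0 < gam) by (unfold gam; simpl in *; lra).
        assert (Hpn : 0 < 2 ^ S n) by (pose proof (pow2_ge1 (S n)); lra).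
        destruct (close (Rmin (Rmin eps e1) eps3) (Rmin (dl / 2 ^ S p') (gam / 2 ^ S n)))
          as [x [Hx [[Hx1 Hx2] [Hx3 Hx4]]]].
        { repeat apply Rmin_pos; auto. }
        { apply Rmin_pos; apply Rdiv_lt_0_compat; auto. }
        pose proof (Rmin_l (Rmin eps e1) eps3). pose proof (Rmin_r (Rmin eps e1) eps3).
        pose proof (Rmin_l eps e1). pose proof (Rmin_r eps e1).
        pose proof (Rmin_l (dl / 2 ^ S p') (gam / 2 ^ S n)).
        pose proof (Rmin_r (dl / 2 ^ S p') (gam / 2 ^ S n)).
        set (e := L - x).
        assert (Hxe : x = L - e) by (unfold e; lra).
        assert (Hnx : it n x = z - e).
        { rewrite Hxe. apply Htr; [unfold e; lra|lia]. }
        destruct (Hc3 e ltac:(unfold e; lra)) as [Hze Tze].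
        assert (Hsx : it (S n) x = T w - e) by (simpl; rewrite Hnx; exact Tze).
        assert (Hb : 2 ^ S p' * Rabs (H x - H L) < 2 * dl).
        { rewrite HqL, Rabs_left1 by lra.
          assert (q - H x < dl / 2 ^ S p') by lra.
          apply Rmult_lt_compat_l with (r := 2 ^ S p') in H6; auto.
          field_simplify in H6; lra. }
        pose proof (iterdiff (S p') x L Hx HL Hb (S n) ltac:(lia)) as Hd.
        assert (Hm : H (it (S n) x) <= H (T w)).
        { apply ax_mono; auto. apply it_S; auto.
          rewrite Hsx; unfold e; lra. }
        assert (q - H x < gam / 2 ^ S n) by lra.
        apply Rmult_lt_compat_l with (r := 2 ^ S n) in H6; auto.
        field_simplify in H6; [|lra]. rewrite HqL in Hd. unfold gam in *. lra. }
      assert (Hf := fixl (S n) (T w) HTw Hlev).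
      simpl in Hf. 
      assert (E1 : Nat.iter p' T (T w) = w).
      { apply ax_inj; [apply it_S; apply ax_TS; auto| auto| exact Hf]. }
      apply Hcw. rewrite <- E1. apply sameH_chi; auto using it_S.
      rewrite (level_it p' (T w) (it (S n) L) HTw (it_S _ _ HL) Hlev).
      change (it (S n) L) with (T (it n L)). rewrite <- Nat.iter_succ_r. rewrite perj. reflexivity.
Qed.

End Core.
Lemma ind_1 u v x : u <= x < v -> Defs.ind u v x = 1.
Proof. intros; unfold Defs.ind; destruct (Rle_dec u x); destruct (Rlt_dec x v); lra. Qed.
Lemma ind_0l u v x : x < u -> Defs.ind u v x = 0.
Proof. intros; unfold Defs.ind; destruct (Rle_dec u x); destruct (Rlt_dec x v); lra. Qed.
Lemma ind_0r u v x : v <= x -> Defs.ind u v x = 0.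
Proof. intros; unfold Defs.ind; destruct (Rle_dec u x); destruct (Rlt_dec x v); lra. Qed.
Lemma ind_01 u v x : Defs.ind u v x = 0 \/ Defs.ind u v x = 1.
Proof. unfold Defs.ind; destruct (Rle_dec u x); destruct (Rlt_dec x v); auto. Qed.

Lemma psum_zero f n : (forall i, (1 <= i <= n)%nat -> f i = 0) -> psum f n = 0.
Proof.
  induction n; intros Hf; simpl; auto.
  rewrite IHn. rewrite Hf by lia. lra. intros; apply Hf; lia.
Qed.

Lemma psum_single f n j : (1 <= j <= n)%nat ->
  (forall i, (1 <= i <= n)%nat -> i <> j -> f i = 0) -> psum f n = f j.
Proof.
  induction n; intros Hj Hf; [lia|].
  simpl. destruct (Nat.eq_dec j (S n)) as [->|Hne].
  - rewrite psum_zero; [lra|]. intros i Hi; apply Hf; lia.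
  - rewrite IHn. rewrite (Hf (S n)) by lia. lra. lia. intros; apply Hf; lia.
Qed.

Lemma psum_mono f m : (forall i, (1 <= i <= m)%nat -> 0 < f i) ->
  forall i k, (i <= k <= m)%nat -> psum f i <= psum f k.
Proof.
  intros Hf i k Hk. induction k.
  - replace i with 0%nat by lia; lra.
  - destruct (Nat.eq_dec i (S k)) as [->|Hne]; [lra|].
    simpl. pose proof (Hf (S k) ltac:(lia)). pose proof (IHk ltac:(lia)). lra.
Qed.

Lemma psum_lt f m : (forall i, (1 <= i <= m)%nat -> 0 < f i) ->
  forall i k, (i < k <= m)%nat -> psum f i + f k <= psum f k.
Proof.
  intros Hf i k Hk. destruct k; [lia|]. simpl.
  pose proof (psum_mono f m Hf i k ltac:(lia)). lra.
Qed.

Lemma psum_nn f m : (forall i, (1 <= i <= m)%nat -> 0 < f i) ->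
  forall k, (k <= m)%nat -> 0 <= psum f k.
Proof. intros Hf k Hk. apply (psum_mono f m Hf 0 k). lia. Qed.

Lemma ex_piece f n x : 0 <= x -> x < psum f n -> exists j, (j < n)%nat /\ psum f j <= x < psum f (S j).
Proof.
  induction n; intros H0 H1; simpl in *; [lra|].
  destruct (Rlt_dec x (psum f n)) as [Hl|Hl].
  - destruct (IHn H0 Hl) as [j [Hj1 Hj2]]. exists j; split; [lia|auto].
  - exists n. split; [lia|]. simpl. lra.
Qed.

Lemma geo_half : is_series (fun n => / 2 ^ (n + 1)) 1.
Proof.
  assert (G := is_series_geom (/ 2) ltac:(rewrite Rabs_pos_eq; lra)).
  assert (G2 : is_series (fun n => / 2 * (/ 2) ^ n) (/ 2 * / (1 - / 2))).
  { apply (is_series_scal_l (/2)) in G. exact G. }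
  replace (/ 2 * / (1 - / 2)) with 1 in G2 by field.
  revert G2. apply is_series_ext. intros n.
  rewrite pow_inv, Nat.add_1_r. simpl. rewrite Rinv_mult. reflexivity.
Qed.

Section Conc.
Variables (m : nat) (a b : nat -> R).
Hypothesis hm : (1 <= m)%nat.
Hypothesis ha : forall i, (1 <= i <= m)%nat -> 0 < a i.
Hypothesis hb : forall i, (1 <= i <= m)%nat -> 0 < b i.
Hypothesis hsum : psum a m + psum b m = 1.

Notation T := (Tmap m a b).
Notation chi := (chiB m a b).
Notation HH := (Hmap m a b).
Notation sa := (psum a m).

Definition PA j x := psum a j <= x < psum a (S j).
Definition PB j x := sa + psum b j <= x < sa + psum b (S j).

Lemma pa_mono i k : (i <= k <= m)%nat -> psum a i <= psum a k.
Proof. apply psum_mono; auto. Qed.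
Lemma pb_mono i k : (i <= k <= m)%nat -> psum b i <= psum b k.
Proof. apply psum_mono; auto. Qed.
Lemma pa_lt i k : (i < k <= m)%nat -> psum a i + a k <= psum a k.
Proof. apply psum_lt; auto. Qed.
Lemma pb_lt i k : (i < k <= m)%nat -> psum b i + b k <= psum b k.
Proof. apply psum_lt; auto. Qed.
Lemma pa_nn k : (k <= m)%nat -> 0 <= psum a k.
Proof. apply psum_nn; auto. Qed.
Lemma pb_nn k : (k <= m)%nat -> 0 <= psum b k.
Proof. apply psum_nn; auto. Qed.

Lemma T_A j x : (j < m)%nat -> PA j x -> T x = x + psum b (S j).
Proof.
  intros Hj [H1 H2]. unfold Tmap, SA.
  assert (Z1 : psum (fun i => Defs.ind (psum a (i - 1)) (psum a i) x * psum b i) m = psum b (S j)).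
  { rewrite (psum_single _ m (S j)).
    - replace (S j - 1)%nat with j by lia. rewrite ind_1 by lra. lra.
    - lia.
    - intros i Hi Hne. destruct (Nat.lt_ge_cases i (S j)).
      + rewrite ind_0r; [lra|]. apply Rle_trans with (psum a j); auto; apply pa_mono; lia.
      + rewrite ind_0l; [lra|]. apply Rlt_le_trans with (psum a (S j)); auto; apply pa_mono; lia. }
  assert (Z2 : psum (fun i => Defs.ind (sa + psum b (i - 1)) (sa + psum b i) x * (sa - psum a (i - 1))) m = 0).
  { apply psum_zero. intros i Hi. rewrite ind_0l; [lra|].
    pose proof (pa_mono (S j) m ltac:(lia)). pose proof (pb_nn (i - 1) ltac:(lia)). lra. }
  rewrite Z1, Z2. lra.
Qed.

Lemma T_B j x : (j < m)%nat -> PB j x -> T x = x - (sa - psum a j).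
Proof.
  intros Hj [H1 H2]. unfold Tmap, SA.
  assert (Z1 : psum (fun i => Defs.ind (psum a (i - 1)) (psum a i) x * psum b i) m = 0).
  { apply psum_zero. intros i Hi. rewrite ind_0r; [lra|].
    pose proof (pa_mono i m ltac:(lia)). pose proof (pb_nn j ltac:(lia)). lra. }
  assert (Z2 : psum (fun i => Defs.ind (sa + psum b (i - 1)) (sa + psum b i) x * (sa - psum a (i - 1))) m = sa - psum a j).
  { rewrite (psum_single _ m (S j)).
    - replace (S j - 1)%nat with j by lia. rewrite ind_1 by lra. lra.
    - lia.
    - intros i Hi Hne. destruct (Nat.lt_ge_cases i (S j)).
      + rewrite ind_0r; [lra|]. apply Rle_trans with (sa + psum b j); auto.
        pose proof (pb_mono i j ltac:(lia)); lra.
      + rewrite ind_0l; [lra|]. apply Rlt_le_trans with (sa + psum b (S j)); auto.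
        pose proof (pb_mono (S j) (i - 1) ltac:(lia)); lra. }
  rewrite Z1, Z2. lra.
Qed.

Lemma chi_A j x : (j < m)%nat -> PA j x -> chi x = 0.
Proof.
  intros Hj [H1 H2]. unfold chiB, SA. apply ind_0l.
  pose proof (pa_mono (S j) m ltac:(lia)). lra.
Qed.

Lemma chi_B j x : (j < m)%nat -> PB j x -> chi x = 1.
Proof.
  intros Hj [H1 H2]. unfold chiB, SA. apply ind_1.
  pose proof (pb_mono (S j) m ltac:(lia)). pose proof (pb_nn j ltac:(lia)). lra.
Qed.

Lemma pieces x : SS x -> (exists j, (j < m)%nat /\ PA j x) \/ (exists j, (j < m)%nat /\ PB j x).
Proof.
  intros [H0 H1]. destruct (Rlt_dec x sa) as [Hl|Hl].
  - left. apply ex_piece; auto.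
  - right. destruct (ex_piece b m (x - sa)) as [j [Hj1 Hj2]]; try lra.
    exists j; split; auto. unfold PB; lra.
Qed.

Lemma chi_SA x : SS x -> (chi x = 0 /\ x < sa) \/ (chi x = 1 /\ sa <= x).
Proof.
  intros Hx. destruct (pieces x Hx) as [[j [Hj Hp]]|[j [Hj Hp]]].
  - left. split. eapply chi_A; eauto. destruct Hp. pose proof (pa_mono (S j) m ltac:(lia)); lra.
  - right. split. eapply chi_B; eauto. destruct Hp. pose proof (pb_nn j ltac:(lia)); lra.
Qed.

Lemma T_SS x : SS x -> SS (T x).
Proof.
  intros Hx. destruct (pieces x Hx) as [[j [Hj Hp]]|[j [Hj Hp]]].
  - rewrite (T_A j x Hj Hp). destruct Hp. pose proof (pa_nn j ltac:(lia)).
    pose proof (pb_nn (S j) ltac:(lia)). pose proof (pa_mono (S j) m ltac:(lia)).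
    pose proof (pb_mono (S j) m ltac:(lia)). split; lra.
  - rewrite (T_B j x Hj Hp). destruct Hp. pose proof (pa_nn j ltac:(lia)).
    pose proof (pb_nn j ltac:(lia)). pose proof (pa_mono j m ltac:(lia)).
    pose proof (pb_mono (S j) m ltac:(lia)). split; lra.
Qed.

Lemma T_exp x y : SS x -> SS y -> x < y -> chi x = chi y -> T x < T y /\ y - x <= T y - T x.
Proof.
  intros Hx Hy Hl Hc.
  destruct (pieces x Hx) as [[j [Hj Hp]]|[j [Hj Hp]]];
  destruct (pieces y Hy) as [[k [Hk Hq]]|[k [Hk Hq]]].
  - rewrite (T_A j x Hj Hp), (T_A k y Hk Hq).
    assert (j <= k)%nat.
    { destruct (Nat.le_gt_cases j k); auto. destruct Hp, Hq.
      pose proof (pa_mono (S k) j ltac:(lia)). lra. }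
    pose proof (pb_mono (S j) (S k) ltac:(lia)). lra.
  - rewrite (chi_A j x Hj Hp), (chi_B k y Hk Hq) in Hc. lra.
  - rewrite (chi_B j x Hj Hp), (chi_A k y Hk Hq) in Hc. lra.
  - rewrite (T_B j x Hj Hp), (T_B k y Hk Hq).
    assert (j <= k)%nat.
    { destruct (Nat.le_gt_cases j k); auto. destruct Hp, Hq.
      pose proof (pb_mono (S k) j ltac:(lia)). lra. }
    pose proof (pa_mono j k ltac:(lia)). lra.
Qed.

Lemma T_inj x y : SS x -> SS y -> T x = T y -> x = y.
Proof.
  intros Hx Hy E.
  assert (cross : forall x y, SS x -> SS y -> chi x = 0 -> chi y = 1 -> T x <> T y).
  { clear x y Hx Hy E. intros x y Hx Hy Cx Cy.
    destruct (pieces x Hx) as [[j [Hj Hp]]|[j [Hj Hp]]];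
    [|rewrite (chi_B j x Hj Hp) in Cx; lra].
    destruct (pieces y Hy) as [[k [Hk Hq]]|[k [Hk Hq]]];
    [rewrite (chi_A k y Hk Hq) in Cy; lra|].
    rewrite (T_A j x Hj Hp), (T_B k y Hk Hq). destruct Hp, Hq.
    destruct (Nat.lt_ge_cases j k).
    - pose proof (pa_mono (S j) k ltac:(lia)). pose proof (pb_mono (S j) k ltac:(lia)). lra.
    - pose proof (pa_mono k j ltac:(lia)). pose proof (pb_mono (S k) (S j) ltac:(lia)). lra. }
  destruct (chi_SA x Hx) as [[Cx _]|[Cx _]]; destruct (chi_SA y Hy) as [[Cy _]|[Cy _]].
  - destruct (Rtotal_order x y) as [Hl|[Hl|Hl]]; auto.
    + destruct (T_exp x y Hx Hy Hl ltac:(lra)); lra.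
    + destruct (T_exp y x Hy Hx Hl ltac:(lra)); lra.
  - exfalso; exact (cross x y Hx Hy Cx Cy E).
  - exfalso; exact (cross y x Hy Hx Cy Cx (eq_sym E)).
  - destruct (Rtotal_order x y) as [Hl|[Hl|Hl]]; auto.
    + destruct (T_exp x y Hx Hy Hl ltac:(lra)); lra.
    + destruct (T_exp y x Hy Hx Hl ltac:(lra)); lra.
Qed.

Lemma chi_01 x : 0 <= chi x <= 1.
Proof. unfold chiB. destruct (ind_01 (SA m a) (SA m a + psum b m) x) as [E|E]; rewrite E; lra. Qed.

Definition hterm x n := chi (Nat.iter n T x) / 2 ^ (n + 1).

Lemma hterm_bd x n : 0 <= hterm x n <= / 2 ^ (n + 1).
Proof.
  unfold hterm. pose proof (chi_01 (Nat.iter n T x)).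
  assert (0 < / 2 ^ (n + 1)) by (apply Rinv_0_lt_compat, pow_lt; lra).
  unfold Rdiv. split; nra.
Qed.

Lemma hterm_ex x : ex_series (hterm x).
Proof.
  apply (@ex_series_le _ R_CompleteNormedModule _ (fun n => / 2 ^ (n + 1))).
  - intros n. pose proof (hterm_bd x n). unfold norm; simpl. unfold abs; simpl.
    rewrite Rabs_pos_eq; lra.
  - eexists; apply geo_half.
Qed.

Lemma H1 x : HH x = chi x / 2 + HH (T x) / 2.
Proof.
  unfold Hmap. change (Series (hterm x) = chi x / 2 + Series (hterm (T x)) / 2).
  rewrite Series_incr_1 by apply hterm_ex.
  unfold hterm at 1. simpl Nat.iter. replace (2 ^ (0 + 1)) with 2 by (simpl; lra).
  rewrite (Series_ext _ (fun n => / 2 * hterm (T x) n)).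
  - rewrite Series_scal_l. lra.
  - intros n. unfold hterm. rewrite Nat.iter_succ_r.
    replace (S n + 1)%nat with (S (n + 1)) by lia. simpl. field.
    apply pow_nonzero; lra.
Qed.

Lemma H_bd x : 0 <= HH x <= 1.
Proof.
  unfold Hmap. change (0 <= Series (hterm x) <= 1). split.
  - replace 0 with (Series (fun n => 0 * hterm x n)).
    + apply Series_le. intros n; pose proof (hterm_bd x n); lra. apply hterm_ex.
    + rewrite Series_scal_l; lra.
  - rewrite <- (is_series_unique _ _ geo_half). apply Series_le.
    intros n; apply hterm_bd. eexists; apply geo_half.
Qed.


Definition cc := Rmin (b 1) (a m).
Lemma cc_pos : 0 < cc.
Proof. unfold cc; apply Rmin_pos; [apply hb|apply ha]; lia. Qed.

Lemma chi_is x : SS x -> chi x = 0 \/ chi x = 1.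
Proof. intros Hx; destruct (chi_SA x Hx) as [[E _]|[E _]]; auto. Qed.

Lemma stepA x : SS x -> chi x = 0 -> x + cc <= T x.
Proof.
  intros Hx Cx. destruct (pieces x Hx) as [[j [Hj Hp]]|[j [Hj Hp]]].
  - rewrite (T_A j x Hj Hp). pose proof (pb_mono 1 (S j) ltac:(lia)).
    replace (psum b 1) with (b 1) in H by (simpl; lra).
    pose proof (Rmin_l (b 1) (a m)). unfold cc; lra.
  - rewrite (chi_B j x Hj Hp) in Cx; lra.
Qed.

Lemma stepB x : SS x -> chi x = 1 -> T x <= x - cc.
Proof.
  intros Hx Cx. destruct (pieces x Hx) as [[j [Hj Hp]]|[j [Hj Hp]]].
  - rewrite (chi_A j x Hj Hp) in Cx; lra.
  - rewrite (T_B j x Hj Hp). pose proof (pa_lt j m ltac:(lia)).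
    pose proof (Rmin_r (b 1) (a m)). unfold cc; lra.
Qed.

Lemma runs : exists K, forall x, SS x ->
  (exists i, (i < K)%nat /\ chi (Nat.iter i T x) = 1) /\
  (exists i, (i < K)%nat /\ chi (Nat.iter i T x) = 0).
Proof.
  destruct (nat_arch (/ cc)) as [K HK]. exists K. intros x Hx.
  pose proof cc_pos as Hc.
  assert (HKc : 1 < INR K * cc).
  { apply Rmult_lt_compat_r with (r := cc) in HK; auto. rewrite Rinv_l in HK; lra. }
  split; apply NNPP; intro Hn.
  - assert (A : forall i, (i <= K)%nat -> x + INR i * cc <= Nat.iter i T x).
    { induction i; intros Hi. simpl; lra.
      rewrite S_INR. simpl (Nat.iter (S i) T x).
      assert (C0 : chi (Nat.iter i T x) = 0).
      { destruct (chi_is _ (it_S T T_SS i x Hx)) as [E|E]; auto.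
        exfalso; apply Hn; exists i; split; [lia|auto]. }
      pose proof (stepA _ (it_S T T_SS i x Hx) C0). pose proof (IHi ltac:(lia)). lra. }
    specialize (A K (le_n K)). destruct (it_S T T_SS K x Hx). destruct Hx. lra.
  - assert (A : forall i, (i <= K)%nat -> Nat.iter i T x <= x - INR i * cc).
    { induction i; intros Hi. simpl; lra.
      rewrite S_INR. simpl (Nat.iter (S i) T x).
      assert (C0 : chi (Nat.iter i T x) = 1).
      { destruct (chi_is _ (it_S T T_SS i x Hx)) as [E|E]; auto.
        exfalso; apply Hn; exists i; split; [lia|auto]. }
      pose proof (stepB _ (it_S T T_SS i x Hx) C0). pose proof (IHi ltac:(lia)). lra. }
    specialize (A K (le_n K)). destruct (it_S T T_SS K x Hx). destruct Hx. lra.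
Qed.

Lemma inv2S n : / 2 ^ (S n) = / 2 ^ n / 2.
Proof. simpl. rewrite Rinv_mult. lra. Qed.

Lemma H_low i y : chi (Nat.iter i T y) = 1 -> / 2 ^ (i + 1) <= HH y.
Proof.
  revert y; induction i; intros y Hc.
  - simpl in Hc. rewrite H1, Hc. pose proof (H_bd (T y)). simpl. lra.
  - rewrite Nat.iter_succ_r in Hc. specialize (IHi _ Hc).
    rewrite H1. pose proof (chi_01 y). replace (S i + 1)%nat with (S (i + 1)) by lia.
    rewrite inv2S. lra.
Qed.

Lemma H_up i y : chi (Nat.iter i T y) = 0 -> HH y <= 1 - / 2 ^ (i + 1).
Proof.
  revert y; induction i; intros y Hc.
  - simpl in Hc. rewrite H1, Hc. pose proof (H_bd (T y)). simpl. lra.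
  - rewrite Nat.iter_succ_r in Hc. specialize (IHi _ Hc).
    rewrite H1. pose proof (chi_01 y). replace (S i + 1)%nat with (S (i + 1)) by lia.
    rewrite inv2S. lra.
Qed.

Lemma sep : exists dl, 0 < dl /\ forall x, SS x ->
  (chi x = 0 /\ HH x <= 1/2 - dl) \/ (chi x = 1 /\ 1/2 + dl <= HH x).
Proof.
  destruct runs as [K HK]. exists (/ 2 ^ (K + 1)). split.
  { apply Rinv_0_lt_compat, pow_lt; lra. }
  intros x Hx. assert (HT := T_SS x Hx).
  assert (Hm : forall i, (i < K)%nat -> / 2 ^ K <= / 2 ^ (i + 1)).
  { intros i Hi. apply Rinv_le_contravar. apply pow_lt; lra. apply Rle_pow; [lra|lia]. }
  rewrite Nat.add_1_r, inv2S.
  destruct (chi_is x Hx) as [C|C]; [left|right]; split; auto; rewrite H1, C.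
  - destruct (HK (T x) HT) as [_ [i [Hi Hc]]]. pose proof (H_up i _ Hc). pose proof (Hm i Hi). lra.
  - destruct (HK (T x) HT) as [[i [Hi Hc]] _]. pose proof (H_low i _ Hc). pose proof (Hm i Hi). lra.
Qed.

Lemma H_mono x y : SS x -> SS y -> x <= y -> HH x <= HH y.
Proof.
  intros Hx Hy Hxy. destruct sep as [dl [Hdl Hsep]].
  destruct (Rle_lt_or_eq_dec x y Hxy) as [Hl|<-]; [|lra].
  apply Rnot_lt_le; intro Hg. set (d := HH x - HH y).
  assert (Hd : 0 < d) by (unfold d; lra).
  assert (A : forall n, SS (Nat.iter n T x) /\ SS (Nat.iter n T y) /\
            Nat.iter n T x < Nat.iter n T y /\ HH (Nat.iter n T x) - HH (Nat.iter n T y) = 2 ^ n * d).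
  { induction n. simpl. unfold d. split; [|split; [|split]]; auto; lra.
    destruct IHn as [U [V [W X]]]. simpl.
    set (u := Nat.iter n T x) in *. set (v := Nat.iter n T y) in *.
    assert (Cuv : chi u = chi v).
    { destruct (chi_SA u U) as [[Cu Su]|[Cu Su]]; destruct (chi_SA v V) as [[Cv Sv]|[Cv Sv]]; try lra.
      destruct (Hsep u U) as [[? ?]|[? ?]]; destruct (Hsep v V) as [[? ?]|[? ?]]; try lra.
      pose proof (pow2_ge1 n). nra. }
    destruct (T_exp u v U V W Cuv). split; [apply T_SS; auto|split; [apply T_SS; auto|split; [lra|]]].
    rewrite (H1 u), (H1 v) in X. rewrite Cuv in X. lra. }
  destruct (big_pow d Hd) as [n Hn]. destruct (A n) as [_ [_ [_ E]]].
  pose proof (H_bd (Nat.iter n T x)). pose proof (H_bd (Nat.iter n T y)). lra.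
Qed.

Lemma T_loc z : SS z ->
    (exists eps, 0 < eps /\ forall e, 0 <= e <= eps -> SS (z - e) /\ T (z - e) = T z - e) \/
    (exists eps, 0 < eps /\ forall e, 0 < e <= eps -> SS (z - e) -> chi (z - e) <> chi z) \/
    (exists w, SS w /\ chi w <> chi z /\ T w <= T z /\
       exists eps, 0 < eps /\ forall e, 0 < e <= eps -> SS (z - e) /\ T (z - e) = T w - e).
Proof.
  intros Hz. destruct (pieces z Hz) as [[j [Hj Hp]]|[j [Hj Hp]]].
  - destruct Hp as [P1 P2]. destruct (Rlt_dec (psum a j) z) as [Hl|Hl].
    + left. exists (z - psum a j). split; [lra|]. intros e He.
      assert (Hpe : PA j (z - e)) by (split; lra).
      pose proof (pa_nn j ltac:(lia)). destruct Hz.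
      split. split; lra. rewrite (T_A j _ Hj Hpe), (T_A j z Hj (conj P1 P2)). lra.
    + assert (Ez : z = psum a j) by lra. destruct j as [|j'].
      * right; left. exists 1. split; [lra|]. intros e He [Hs _]. simpl in Ez. lra.
      * right; right. exists (sa + psum b (S j')).
        assert (Hw : PB (S j') (sa + psum b (S j'))).
        { split. lra. pose proof (hb (S (S j')) ltac:(lia)). simpl; lra. }
        pose proof (pb_mono (S (S j')) m ltac:(lia)). pose proof (pb_nn (S j') ltac:(lia)).
        pose proof (pa_nn (S j') ltac:(lia)).
        assert (Eb : psum b (S (S j')) = psum b (S j') + b (S (S j'))) by reflexivity.
        pose proof (hb (S (S j')) ltac:(lia)).
        pose proof (pa_nn m (le_n m)). split. split; lra.
        rewrite (chi_B _ _ Hj Hw), (chi_A _ _ Hj (conj P1 P2)). split. lra.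
        rewrite (T_B _ _ Hj Hw), (T_A _ _ Hj (conj P1 P2)). split.
        lra.
        exists (a (S j')). split. apply ha; lia. intros e He.
        assert (Hpe : PA j' (z - e)) by (unfold PA; simpl in Ez; lra).
        pose proof (pa_nn j' ltac:(lia)).
        split. destruct Hpe; split; destruct Hz; lra. rewrite (T_A j' _ ltac:(lia) Hpe). lra.
  - destruct Hp as [P1 P2]. destruct (Rlt_dec (sa + psum b j) z) as [Hl|Hl].
    + left. exists (z - (sa + psum b j)). split; [lra|]. intros e He.
      assert (Hpe : PB j (z - e)) by (split; lra).
      pose proof (pb_nn j ltac:(lia)). pose proof (pa_nn m ltac:(lia)). destruct Hz.
      split. split; lra. rewrite (T_B j _ Hj Hpe), (T_B j z Hj (conj P1 P2)). lra.
    + assert (Ez : z = sa + psum b j) by lra. destruct j as [|j'].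
      * right; left. exists 1. split; [lra|]. intros e He Hs.
        rewrite (chi_B _ _ Hj (conj P1 P2)).
        destruct (chi_SA _ Hs) as [[C _]|[_ C]]; [lra|simpl in Ez; lra].
      * right; right. exists (psum a j').
        assert (Hw : PA j' (psum a j')).
        { split. lra. pose proof (ha (S j') ltac:(lia)). simpl; lra. }
        pose proof (pa_nn j' ltac:(lia)). pose proof (pa_mono (S j') m ltac:(lia)).
        pose proof (pb_mono (S j') m ltac:(lia)). pose proof (pb_nn (S j') ltac:(lia)).
        assert (Ea : psum a (S j') = psum a j' + a (S j')) by reflexivity.
        pose proof (ha (S j') ltac:(lia)).
        split. split; lra.
        rewrite (chi_A j' _ ltac:(lia) Hw), (chi_B _ _ Hj (conj P1 P2)). split. lra.
        rewrite (T_A j' _ ltac:(lia) Hw), (T_B _ _ Hj (conj P1 P2)). split.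
        lra.
        exists (b (S j')). split. apply hb; lia. intros e He.
        assert (Hpe : PB j' (z - e)) by (unfold PB; simpl in Ez; lra).
        pose proof (pb_nn j' ltac:(lia)).
        split. destruct Hpe; split; destruct Hz; lra. rewrite (T_B j' _ ltac:(lia) Hpe). lra.
Qed.


Lemma PA_SS j x : (j < m)%nat -> PA j x -> SS x.
Proof.
  intros Hj [P1 P2]. pose proof (pa_nn j ltac:(lia)). pose proof (pa_mono (S j) m ltac:(lia)).
  pose proof (pb_nn m (le_n m)). split; lra.
Qed.

Lemma PB_SS j x : (j < m)%nat -> PB j x -> SS x.
Proof.
  intros Hj [P1 P2]. pose proof (pb_nn j ltac:(lia)). pose proof (pb_mono (S j) m ltac:(lia)).
  pose proof (pa_nn m (le_n m)). split; lra.
Qed.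

Lemma gap_i j c : (j < m)%nat -> (forall x, PA j x -> HH x = c) ->
  exists eta, 0 < eta /\ forall y, PB j y -> HH y <= 1/2 + c - eta.
Proof.
  intros Hj Hc. destruct sep as [dl [Hdl Hsep]].
  set (L := psum a j + psum b (S j)).
  assert (Ea : psum a (S j) = psum a j + a (S j)) by reflexivity.
  assert (Eb : psum b (S j) = psum b j + b (S j)) by reflexivity.
  pose proof (ha (S j) ltac:(lia)). pose proof (hb (S j) ltac:(lia)).
  pose proof (pa_nn j ltac:(lia)). pose proof (pb_nn j ltac:(lia)).
  pose proof (pa_mono (S j) m ltac:(lia)). pose proof (pb_mono (S j) m ltac:(lia)).
  assert (Hw0 : PA j (psum a j)) by (split; lra).
  assert (Hn : ~ (forall eta, 0 < eta -> exists x, SS x /\ x < L /\ 2 * c - eta < HH x)).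
  { apply (core T HH chi dl T_SS T_inj (fun x _ => H1 x) Hdl Hsep H_mono T_exp T_loc
             L (psum a (S j) + psum b (S j)) (2 * c) (psum a j) (b (S j))).
    - unfold L; lra.
    - unfold L; lra.
    - lra.
    - intros t Ht. set (x := t - psum b (S j)).
      assert (Hx : PA j x) by (unfold x, L in *; split; lra).
      assert (Tx : T x = t) by (rewrite (T_A j x Hj Hx); unfold x; lra).
      rewrite <- Tx. pose proof (H1 x). rewrite (chi_A j x Hj Hx), (Hc x Hx) in H6. lra.
    - apply (PA_SS j); auto.
    - rewrite (T_A j _ Hj Hw0). reflexivity.
    - auto.
    - intros x Hx. exists (x + (sa - psum a j)).
      assert (Hw : PB j (x + (sa - psum a j))) by (unfold L in Hx; split; lra).
      split. apply (PB_SS j); auto. split.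
      rewrite (T_B j _ Hj Hw). lra.
      rewrite (chi_B j _ Hj Hw), (chi_A j _ Hj Hw0). lra. }
  apply NNPP; intro Hc2. apply Hn. intros eta Heta. apply NNPP; intro Hx. apply Hc2.
  exists (eta / 2). split; [lra|]. intros y Hy.
  assert (HTy : T y = y - (sa - psum a j)) by (apply T_B; auto).
  assert (Sy : SS (T y)) by (apply T_SS, (PB_SS j); auto).
  assert (HH (T y) <= 2 * c - eta).
  { apply Rnot_lt_le; intro Hlt. apply Hx. exists (T y). split; auto. split; auto.
    destruct Hy; unfold L; lra. }
  rewrite H1, (chi_B j y Hj Hy). lra.
Qed.

Lemma gap_ii j c : (S j < m)%nat -> (forall x, PB (S j) x -> HH x = c) ->
  exists eta, 0 < eta /\ forall y, PA j y -> HH y <= c - 1/2 - eta.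
Proof.
  intros Hj Hc. destruct sep as [dl [Hdl Hsep]].
  set (L := psum a (S j) + psum b (S j)).
  assert (Ea : psum a (S j) = psum a j + a (S j)) by reflexivity.
  assert (Eb : psum b (S (S j)) = psum b (S j) + b (S (S j))) by reflexivity.
  pose proof (ha (S j) ltac:(lia)). pose proof (hb (S (S j)) ltac:(lia)).
  pose proof (pa_nn j ltac:(lia)). pose proof (pb_nn (S j) ltac:(lia)).
  pose proof (pa_mono (S j) m ltac:(lia)). pose proof (pb_mono (S (S j)) m ltac:(lia)).
  assert (Hw0 : PB (S j) (sa + psum b (S j))) by (split; lra).
  assert (Hn : ~ (forall eta, 0 < eta -> exists x, SS x /\ x < L /\ 2 * c - 1 - eta < HH x)).
  { apply (core T HH chi dl T_SS T_inj (fun x _ => H1 x) Hdl Hsep H_mono T_exp T_loc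
             L (psum a (S j) + psum b (S (S j))) (2 * c - 1) (sa + psum b (S j)) (a (S j))).
    - unfold L; lra.
    - unfold L; lra.
    - lra.
    - intros t Ht. set (x := t + (sa - psum a (S j))).
      assert (Hx : PB (S j) x) by (unfold x, L in *; split; lra).
      assert (Tx : T x = t) by (rewrite (T_B (S j) x Hj Hx); unfold x; lra).
      rewrite <- Tx. pose proof (H1 x). rewrite (chi_B (S j) x Hj Hx), (Hc x Hx) in H6. lra.
    - apply (PB_SS (S j)); auto.
    - rewrite (T_B (S j) _ Hj Hw0). unfold L. lra.
    - auto.
    - intros x Hx. exists (x - psum b (S j)).
      assert (Hw : PA j (x - psum b (S j))) by (unfold L in Hx; split; lra).
      split. apply (PA_SS j); auto; lia. split.
      rewrite (T_A j _ ltac:(lia) Hw). lra.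
      rewrite (chi_A j _ ltac:(lia) Hw), (chi_B (S j) _ Hj Hw0). lra. }
  apply NNPP; intro Hc2. apply Hn. intros eta Heta. apply NNPP; intro Hx. apply Hc2.
  exists (eta / 2). split; [lra|]. intros y Hy.
  assert (HTy : T y = y + psum b (S j)) by (apply T_A; auto; lia).
  assert (Sy : SS (T y)) by (apply T_SS, (PA_SS j); auto; lia).
  assert (HH (T y) <= 2 * c - 1 - eta).
  { apply Rnot_lt_le; intro Hlt. apply Hx. exists (T y). split; auto. split; auto.
    destruct Hy; unfold L; lra. }
  rewrite H1, (chi_A j y ltac:(lia) Hy). lra.
Qed.

Lemma no_single_iii : ~ (exists c, forall x, (PA (m - 1) x \/ PB 0 x) -> HH x = c).
Proof.
  intros [c Hc]. destruct sep as [dl [Hdl Hsep]].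
  assert (Ha : PA (m - 1) (psum a (m - 1))).
  { split. lra. replace (S (m - 1)) with m by lia.
    pose proof (pa_lt (m - 1) m ltac:(lia)). pose proof (ha m ltac:(lia)). lra. }
  assert (Hb : PB 0 sa).
  { split. simpl; lra. pose proof (hb 1 ltac:(lia)). simpl; lra. }
  pose proof (Hc _ (or_introl Ha)). pose proof (Hc _ (or_intror Hb)).
  destruct (Hsep _ (PA_SS (m - 1) _ ltac:(lia) Ha)) as [[C1 C2]|[C1 C2]];
  [|rewrite (chi_A (m - 1) _ ltac:(lia) Ha) in C1; lra].
  destruct (Hsep _ (PB_SS 0 _ ltac:(lia) Hb)) as [[C3 C4]|[C3 C4]];
  [rewrite (chi_B 0 _ ltac:(lia) Hb) in C3; lra|]. lra.
Qed.

End Conc.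

Lemma hull_le (X : R -> Prop) M t : (forall y, X y -> y <= M) -> closed_convex_hull X t -> t <= M.
Proof.
  intros HX Ht. apply (Ht (fun u => u <= M)); auto.
  - unfold closed_set, open_set, complementary, neighbourhood. intros x Hx.
    assert (Hp : 0 < x - M) by lra. exists (mkposreal _ Hp). intros y Hy.
    unfold disc in Hy; simpl in Hy. apply Rabs_def2 in Hy. lra.
  - intros x y s Hx Hy Hs. nra.
Qed.

Lemma hull_ge (X : R -> Prop) M t : (forall y, X y -> M <= y) -> closed_convex_hull X t -> M <= t.
Proof.
  intros HX Ht. apply (Ht (fun u => M <= u)); auto.
  - unfold closed_set, open_set, complementary, neighbourhood. intros x Hx.
    assert (Hp : 0 < M - x) by lra. exists (mkposreal _ Hp). intros y Hy.
    unfold disc in Hy; simpl in Hy. apply Rabs_def2 in Hy. lra.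
  - intros x y s Hx Hy Hs. nra.
Qed.

Lemma hull_img_le (f : R -> R) (C : R -> Prop) M t : (forall x, C x -> f x <= M) ->
  closed_convex_hull (image f C) t -> t <= M.
Proof. intros HC. apply hull_le. intros y [x [Hx <-]]. auto. Qed.

Lemma hull_img_eq (f : R -> R) (C : R -> Prop) c t : (forall x, C x -> f x = c) ->
  closed_convex_hull (image f C) t -> t = c.
Proof.
  intros HC Ht. apply Rle_antisym.
  - apply (hull_img_le f C); auto. intros x Hx; rewrite HC; auto; lra.
  - apply (hull_ge (image f C) c t); auto. intros y [x [Hx <-]]. rewrite HC; auto; lra.
Qed.

Lemma single_const (f : R -> R) (C : R -> Prop) : is_singleton (image f C) ->
  exists c, forall x, C x -> f x = c.
Proof.
  intros [c Hc]. exists c. intros x Hx. apply Hc. exists x; auto.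
Qed.

Theorem proposition4 (m : nat) (a b : nat -> R)
  (hm : (1 <= m)%nat)
  (ha : forall i, (1 <= i <= m)%nat -> 0 < a i)
  (hb : forall i, (1 <= i <= m)%nat -> 0 < b i)
  (hsum : psum a m + psum b m = 1) :
  let H := Hmap m a b in
  let J := fun C : R -> Prop => closed_convex_hull (image H C) in
  let A := Aset a in
  let B := Bset m a b in
  (forall i, (1 <= i)%nat -> (i <= m - 1)%nat ->
     is_singleton (image H (A i)) ->
     set_lt (shift (J (B i)) (- (1/2))) (J (A i)) \/
     set_lt (J (A i)) (shift (J (B (S i))) (- (1/2)))) /\
  (forall i, (2 <= i)%nat -> (i <= m)%nat ->
     is_singleton (image H (B i)) ->
     set_lt (shift (J (A (i - 1)%nat)) (1/2)) (J (B i)) \/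
     set_lt (J (B i)) (shift (J (A i)) (1/2))) /\
  (is_singleton (image H (setU (A m) (B 1%nat))) ->
     set_lt (shift (J (B m)) (- (1/2))) (J (setU (A m) (B 1%nat))) \/
     set_lt (J (setU (A m) (B 1%nat))) (shift (J (A 1%nat)) (1/2))).
Proof.
  intros H J A B.
  assert (EA : forall j x, A (S j) x <-> PA a j x).
  { intros j x. unfold A, Aset, PA. replace (S j - 1)%nat with j by lia. tauto. }
  assert (EB : forall j x, B (S j) x <-> PB m a b j x).
  { intros j x. unfold B, Bset, PB, SA. replace (S j - 1)%nat with j by lia. tauto. }
  split; [|split].
  - intros i Hi1 Hi2 Hs. destruct i as [|j]; [lia|].
    destruct (single_const _ _ Hs) as [c Hc].
    destruct (gap_i m a b hm ha hb hsum j c ltac:(lia)) as [eta [Heta Hg]].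
    { intros x Hx. apply Hc, EA; auto. }
    left. intros x z [y [Hy ->]] Hz.
    assert (y <= 1/2 + c - eta).
    { apply (hull_img_le H (B (S j))); auto. intros u Hu. apply Hg, EB; auto. }
    assert (z = c) by (apply (hull_img_eq H (A (S j))); auto).
    lra.
  - intros i Hi1 Hi2 Hs. destruct i as [|[|j]]; [lia|lia|].
    destruct (single_const _ _ Hs) as [c Hc].
    destruct (gap_ii m a b hm ha hb hsum j c ltac:(lia)) as [eta [Heta Hg]].
    { intros x Hx. apply Hc, EB; auto. }
    left. intros x z [y [Hy ->]] Hz.
    replace (S (S j) - 1)%nat with (S j) in Hy by lia.
    assert (y <= c - 1/2 - eta).
    { apply (hull_img_le H (A (S j))); auto. intros u Hu. apply Hg, EA; auto. }
    assert (z = c) by (apply (hull_img_eq H (B (S (S j)))); auto).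
    lra.
  - intros Hs. exfalso. destruct (single_const _ _ Hs) as [c Hc].
    apply (no_single_iii m a b hm ha hb hsum). exists c. intros x Hx. apply Hc.
    destruct Hx as [Hx|Hx]; [left|right].
    + replace m with (S (m - 1)) by lia. apply EA. exact Hx.
    + apply EB. exact Hx.
Qed.
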